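(* Let $X$ be a topological space and let $A\subseteq X$ be an open subset whose closure $\overline{A}$ in $X$ is path connected. Let $p:X\to X/A$ be the quotient map and $*=p(A)$. Then for every $a\in A$, the image of the induced continuous homomorphism $p_*:\pi_1^{top}(X,a)\to \pi_1^{top}(X/A,* )$ is dense, i.e. $\overline{p_*\pi_1^{top}(X,a)}=\pi_1^{top}(X/A,* )$.
   Context: For $A\subseteq X$, $X/A$ denotes the quotient space obtained from $X$ by identifying all points of $A$ to a single point $*$, with quotient map $p$. For a pointed space $(X,x)$, $\Omega(X,x)$ is the space of loops $[0,1]\to X$ based at $x$ with the compact-open topology, and the topological fundamental group $\pi_1^{top}(X,x)$ is the fundamental group $\pi_1(X,x)$ equipped with the quotient topology with respect to the canonical surjection $\Omega(X,x)\to\pi_1(X,x)$ sending a loop to its homotopy class (rel endpoints). A based continuous map $f$ induces a continuous homomorphism $f_*$ of topological fundamental groups. *)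

(* Defs.v *)
From Stdlib Require Import Reals Lra List.
Open Scope R_scope.

Definition topology (T : Type) := (T -> Prop) -> Prop.

Definition is_topology {T : Type} (O : topology T) : Prop :=
  O (fun _ => True) /\ O (fun _ => False) /\
  (forall U V, O U -> O V -> O (fun x => U x /\ V x)) /\
  (forall F : (T -> Prop) -> Prop,
      (forall U, F U -> O U) -> O (fun x => exists U, F U /\ U x)).

Definition generated {T : Type} (B : (T -> Prop) -> Prop) : topology T :=
  fun U => forall O : topology T, is_topology O -> (forall V, B V -> O V) -> O U.

Definition continuous {S T : Type} (OS : topology S) (OT : topology T) (f : S -> T) : Prop :=
  forall V, OT V -> OS (fun x => V (f x)).

Definition closure {T : Type} (O : topology T) (P : T -> Prop) : T -> Prop :=
  fun x => forall U, O U -> U x -> exists y, P y /\ U y.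

Definition dense {T : Type} (O : topology T) (P : T -> Prop) : Prop :=
  forall x, closure O P x.

Definition compact {T : Type} (O : topology T) (K : T -> Prop) : Prop :=
  forall F : (T -> Prop) -> Prop,
    (forall U, F U -> O U) ->
    (forall x, K x -> exists U, F U /\ U x) ->
    exists l : list (T -> Prop),
      (forall U, In U l -> F U) /\ (forall x, K x -> exists U, In U l /\ U x).

Definition subspace {T : Type} (O : topology T) (P : T -> Prop) : topology {x | P x} :=
  fun V => exists U, O U /\ forall x : {x | P x}, V x <-> U (proj1_sig x).

Definition prod_top {S T : Type} (OS : topology S) (OT : topology T) : topology (S * T) :=
  generated (fun W => exists U V, OS U /\ OT V /\
                        forall z, W z <-> (U (fst z) /\ V (snd z))).

Definition R_open : topology R :=
  fun U => forall x, U x -> exists eps, 0 < eps /\ forall y, Rabs (y - x) < eps -> U y.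

Definition I := {r : R | 0 <= r <= 1}.
Definition I_top : topology I := subspace R_open (fun r => 0 <= r <= 1).

Lemma I0_pf : 0 <= 0 <= 1. Proof. lra. Qed.
Lemma I1_pf : 0 <= 1 <= 1. Proof. lra. Qed.
Definition i0 : I := exist _ 0 I0_pf.
Definition i1 : I := exist _ 1 I1_pf.

Definition path_connected {X : Type} (OX : topology X) (P : X -> Prop) : Prop :=
  forall x y, P x -> P y ->
    exists g : I -> X, continuous I_top OX g /\ g i0 = x /\ g i1 = y /\ forall t, P (g t).

Definition is_loop {Y : Type} (OY : topology Y) (y : Y) (g : I -> Y) : Prop :=
  continuous I_top OY g /\ g i0 = y /\ g i1 = y.

Definition Loop {Y : Type} (OY : topology Y) (y : Y) := {g : I -> Y | is_loop OY y g}.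

(** Compact-open topology on Omega(Y,y): generated by the sets
    V(K,U) = {g | g(K) ⊆ U}, K ⊆ [0,1] compact, U ⊆ Y open. *)
Definition loop_top {Y : Type} (OY : topology Y) (y : Y) : topology (Loop OY y) :=
  generated (fun W => exists (K : I -> Prop) (U : Y -> Prop),
               compact I_top K /\ OY U /\
               forall g : Loop OY y, W g <-> (forall t, K t -> U (proj1_sig g t))).

Definition homotopic_rel {Y : Type} (OY : topology Y) (y : Y) (g h : I -> Y) : Prop :=
  exists H : I * I -> Y, continuous (prod_top I_top I_top) OY H /\
    (forall s, H (s, i0) = g s) /\ (forall s, H (s, i1) = h s) /\
    (forall t, H (i0, t) = y) /\ (forall t, H (i1, t) = y).

Definition hclass {Y : Type} (OY : topology Y) (y : Y) (g : I -> Y) : (I -> Y) -> Prop :=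
  fun h => is_loop OY y h /\ homotopic_rel OY y g h.

Definition Pi1 {Y : Type} (OY : topology Y) (y : Y) :=
  {C : (I -> Y) -> Prop | exists g, is_loop OY y g /\ C = hclass OY y g}.

Definition cls {Y : Type} (OY : topology Y) (y : Y) (g : Loop OY y) : Pi1 OY y :=
  exist _ (hclass OY y (proj1_sig g))
        (ex_intro _ (proj1_sig g) (conj (proj2_sig g) eq_refl)).

(** Quotient topology on pi_1 w.r.t. Omega(Y,y) -> pi_1(Y,y). *)
Definition pi1_top {Y : Type} (OY : topology Y) (y : Y) : topology (Pi1 OY y) :=
  fun W => loop_top OY y (fun g => W (cls OY y g)).

(** The quotient X/A: classes of the relation "x = y or both in A". *)
Definition qrel {X : Type} (A : X -> Prop) (x : X) : X -> Prop :=
  fun z => x = z \/ (A x /\ A z).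

Definition QT {X : Type} (A : X -> Prop) := {S : X -> Prop | exists x, S = qrel A x}.

Definition qmap {X : Type} (A : X -> Prop) (x : X) : QT A :=
  exist _ (qrel A x) (ex_intro _ x eq_refl).

Definition quot_top {X : Type} (OX : topology X) (A : X -> Prop) : topology (QT A) :=
  fun V => OX (fun x => V (qmap A x)).

Definition pstar_image {X : Type} (OX : topology X) (A : X -> Prop) (a : X)
  : Pi1 (quot_top OX A) (qmap A a) -> Prop :=
  fun c => exists g : I -> X, is_loop OX a g /\
    proj1_sig c = hclass (quot_top OX A) (qmap A a) (fun t => qmap A (g t)).

(* Main.v *)
Require Import Defs.
From Stdlib Require Import Reals Lra List.
From Stdlib Require Import Classical ClassicalEpsilon FunctionalExtensionality PropExtensionality ProofIrrelevance.
Open Scope R_scope.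

Lemma pext {T} (P Q : T -> Prop) : (forall x, P x <-> Q x) -> P = Q.
Proof. intro H. apply functional_extensionality; intro x. apply propositional_extensionality. apply H. Qed.

Lemma sig_ext {T} (P : T -> Prop) (u v : sig P) : proj1_sig u = proj1_sig v -> u = v.
Proof. destruct u as [u pu], v as [v pv]; simpl; intro E; subst. f_equal. apply proof_irrelevance. Qed.

Lemma open_ext {T} (O : topology T) (P Q : T -> Prop) : O P -> (forall x, P x <-> Q x) -> O Q.
Proof. intros H E. rewrite <- (pext P Q E). exact H. Qed.

Lemma local_open {T} (O : topology T) (P : T -> Prop) : is_topology O ->
  (forall x, P x -> exists U, O U /\ U x /\ forall y, U y -> P y) -> O P.
Proof.
  intros [_ [_ [_ Hu]]] H.
  apply open_ext with (fun x => exists U, (O U /\ forall y, U y -> P y) /\ U x).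
  - apply Hu. intros U [HU _]; exact HU.
  - intro x; split.
    + intros [U [[_ HU] Ux]]; auto.
    + intro Px. destruct (H x Px) as [U [OU [Ux HU]]]. exists U; auto.
Qed.

Lemma open_inter {T} (O : topology T) U V : is_topology O -> O U -> O V -> O (fun x => U x /\ V x).
Proof. intros [_ [_ [Hi _]]]; auto. Qed.

Lemma open_union2 {T} (O : topology T) U V : is_topology O -> O U -> O V -> O (fun x => U x \/ V x).
Proof.
  intros HO HU HV. destruct HO as [_ [_ [_ Hu]]].
  apply open_ext with (fun x => exists W, (W = U \/ W = V) /\ W x).
  - apply Hu. intros W [->| ->]; auto.
  - intro x; split.
    + intros [W [[->| ->] Wx]]; auto.
    + intros [Ux|Vx]; [exists U|exists V]; auto.
Qed.

Lemma open_True {T} (O : topology T) : is_topology O -> O (fun _ => True).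
Proof. intros [H _]; exact H. Qed.

Lemma gen_top {T} (B : (T->Prop)->Prop) : is_topology (generated B).
Proof.
  unfold generated; repeat split.
  - intros O [H _] _. exact H.
  - intros O [_ [H _]] _. exact H.
  - intros U V HU HV O HO HB. destruct HO as [h1 [h2 [h3 h4]]].
    apply h3; [apply HU|apply HV]; auto; repeat split; auto.
  - intros F HF O HO HB. destruct HO as [h1 [h2 [h3 h4]]]. apply h4.
    intros U FU. apply HF; auto. repeat split; auto.
Qed.

Definition fin_top {T} (B : (T->Prop)->Prop) : topology T :=
  fun U => forall x, U x -> exists l : list (T->Prop),
    (forall V, In V l -> B V /\ V x) /\ (forall y, (forall V, In V l -> V y) -> U y).

Lemma fin_top_is {T} (B : (T->Prop)->Prop) : is_topology (fin_top B).
Proof.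
  unfold fin_top; repeat split.
  - intros x _. exists nil. split; [intros V []|auto].
  - intros x [].
  - intros U V HU HV x [Ux Vx].
    destruct (HU x Ux) as [l1 [A1 B1]]. destruct (HV x Vx) as [l2 [A2 B2]].
    exists (l1 ++ l2). split.
    + intros W HW. apply in_app_iff in HW. destruct HW; auto.
    + intros y Hy. split; [apply B1|apply B2]; intros W HW; apply Hy, in_app_iff; auto.
  - intros F HF x [U [FU Ux]]. destruct (HF U FU x Ux) as [l [A1 B1]].
    exists l. split; auto. intros y Hy. exists U; auto.
Qed.

Lemma gen_basis {T} (B : (T->Prop)->Prop) U x : generated B U -> U x ->
  exists l : list (T->Prop), (forall V, In V l -> B V /\ V x) /\ (forall y, (forall V, In V l -> V y) -> U y).
Proof.
  intros H Ux. apply (H (fin_top B) (fin_top_is B)); auto.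
  intros V BV y Vy. exists (V :: nil). split.
  - intros W [<-|[]]; auto.
  - intros z Hz. apply Hz; left; auto.
Qed.

Lemma cont_gen {S T} (OS : topology S) (B : (T->Prop)->Prop) (f : S -> T) :
  is_topology OS -> (forall V, B V -> OS (fun x => V (f x))) -> continuous OS (generated B) f.
Proof.
  intros HS HB V HV. apply (HV (fun V => OS (fun x => V (f x)))); auto.
  destruct HS as [h1 [h2 [h3 h4]]]. repeat split.
  - exact h1.
  - exact h2.
  - intros U W; apply h3.
  - intros F HF.
    apply open_ext with (fun x => exists U, (exists W, F W /\ U = fun y => W (f y)) /\ U x).
    + apply h4. intros U [W [FW ->]]. apply HF, FW.
    + intro x; split.
      * intros [U [[W [FW ->]] Ux]]; eauto.
      * intros [W [FW Wx]]. exists (fun y => W (f y)); eauto.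
Qed.

Lemma R_open_top : is_topology R_open.
Proof.
  unfold R_open; repeat split.
  - intros x _. exists 1. split; auto; lra.
  - intros x [].
  - intros U V HU HV x [Ux Vx]. destruct (HU x Ux) as [e1 [p1 H1]]. destruct (HV x Vx) as [e2 [p2 H2]].
    exists (Rmin e1 e2). split. apply Rmin_glb_lt; auto.
    intros y Hy. split; [apply H1|apply H2]; eapply Rlt_le_trans; eauto; [apply Rmin_l|apply Rmin_r].
  - intros F HF x [U [FU Ux]]. destruct (HF U FU x Ux) as [e [pe He]]. exists e; split; auto.
    intros y Hy; exists U; auto.
Qed.

Lemma subspace_top {T} (O : topology T) P : is_topology O -> is_topology (subspace O P).
Proof.
  intros HO. pose proof HO as [h1 [h2 [h3 h4]]]. unfold subspace; repeat split.
  - exists (fun _ => True). split; auto. intro; tauto.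
  - exists (fun _ => False). split; auto. intro; tauto.
  - intros U V [U' [HU' EU]] [V' [HV' EV]]. exists (fun x => U' x /\ V' x). split; auto.
    intro x. rewrite EU, EV. tauto.
  - intros F HF.
    exists (fun y => exists U, (exists V, F V /\ O U /\ forall x, V x <-> U (proj1_sig x)) /\ U y).
    split.
    + apply h4. intros U [V [_ [OU _]]]; auto.
    + intro x; split.
      * intros [V [FV Vx]]. destruct (HF V FV) as [U [OU EU]]. exists U. split; eauto. apply EU; auto.
      * intros [U [[V [FV [OU EU]]] Ux]]. exists V; split; auto. apply EU; auto.
Qed.

Lemma I_top_is : is_topology I_top.
Proof. apply subspace_top, R_open_top. Qed.

Lemma I_open_ball (V : I -> Prop) : I_top V -> forall t, V t ->
  exists e, 0 < e /\ forall t' : I, Rabs (proj1_sig t' - proj1_sig t) < e -> V t'.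
Proof. intros [U [HU HUV]] t Vt. apply HUV in Vt. destruct (HU _ Vt) as [e [he H]].
  exists e; split; auto. intros t' Ht. apply HUV, H, Ht. Qed.

Lemma ball_I_open (V : I -> Prop) :
  (forall t, V t -> exists e, 0 < e /\ forall t' : I, Rabs (proj1_sig t' - proj1_sig t) < e -> V t') -> I_top V.
Proof.
  intro H. exists (fun x => exists t : I, exists e, 0 < e /\ (forall t' : I, Rabs (proj1_sig t' - proj1_sig t) < e -> V t') /\ Rabs (x - proj1_sig t) < e).
  split.
  - intros x [t [e [he [Ht Hx]]]]. exists (e - Rabs (x - proj1_sig t)). split. lra.
    intros y Hy. exists t, e. repeat split; auto.
    pose proof (Rabs_triang (y - x) (x - proj1_sig t)) as T.
    replace (y - x + (x - proj1_sig t)) with (y - proj1_sig t) in T by ring. lra.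
  - intro t'. split.
    + intro Vt. destruct (H t' Vt) as [e [he He]]. exists t', e. repeat split; auto.
      unfold Rminus. rewrite Rplus_opp_r, Rabs_R0; auto.
    + intros [t [e [he [Ht Hx]]]]. apply Ht, Hx.
Qed.

Definition clip (x : R) : I.
Proof.
  refine (exist _ (Rmax 0 (Rmin 1 x)) _).
  split; [apply Rmax_l | apply Rmax_lub; [lra | apply Rmin_l]].
Defined.

Lemma clip_id x : 0 <= x <= 1 -> proj1_sig (clip x) = x.
Proof. intros H. simpl. unfold Rmax, Rmin. repeat destruct Rle_dec; lra. Qed.

Lemma clip_of (t : I) : clip (proj1_sig t) = t.
Proof. apply sig_ext. apply clip_id. apply (proj2_sig t). Qed.

Lemma clip0 : clip 0 = i0.
Proof. apply sig_ext. rewrite clip_id; simpl; lra. Qed.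
Lemma clip1 : clip 1 = i1.
Proof. apply sig_ext. rewrite clip_id; simpl; lra. Qed.

Lemma clip_lip x y : Rabs (proj1_sig (clip x) - proj1_sig (clip y)) <= Rabs (x - y).
Proof. simpl. unfold Rmax, Rmin. repeat destruct Rle_dec; unfold Rabs; repeat destruct Rcase_abs; lra. Qed.

Lemma I_bounds (t : I) : 0 <= proj1_sig t <= 1.
Proof. apply (proj2_sig t). Qed.

Definition LCR {Z} (OZ : topology Z) (S : R -> Prop) (h : R -> Z) (x : R) : Prop :=
  forall V, OZ V -> V (h x) -> exists d, 0 < d /\ forall y, 0 <= y <= 1 -> S y -> Rabs (y - x) < d -> V (h y).

Lemma LCR_cont {Z} (OZ : topology Z) (h : R -> Z) :
  (forall t : I, LCR OZ (fun _ => True) h (proj1_sig t)) -> continuous I_top OZ (fun t => h (proj1_sig t)).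
Proof.
  intros H V HV. apply ball_I_open. intros t Vt. destruct (H t V HV Vt) as [d [hd Hd]].
  exists d; split; auto. intros t' Ht'. apply Hd; auto. apply I_bounds.
Qed.

Lemma cont_LCR {Z} (OZ : topology Z) (g : I -> Z) : continuous I_top OZ g ->
  forall x, 0 <= x <= 1 -> LCR OZ (fun _ => True) (fun y => g (clip y)) x.
Proof.
  intros Hg x Hx V HV Vx. destruct (I_open_ball _ (Hg V HV) (clip x) Vx) as [e [he He]].
  exists e; split; auto. intros y Hy _ Hxy. apply He. rewrite !clip_id; auto.
Qed.

Lemma LCR_union {Z} (OZ : topology Z) S1 S2 h x : LCR OZ S1 h x -> LCR OZ S2 h x ->
  LCR OZ (fun y => S1 y \/ S2 y) h x.
Proof.
  intros H1 H2 V HV Vx. destruct (H1 V HV Vx) as [d1 [p1 D1]]. destruct (H2 V HV Vx) as [d2 [p2 D2]].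
  exists (Rmin d1 d2). split. apply Rmin_glb_lt; auto.
  intros y Hy [S|S] Hd.
  - apply D1; auto. eapply Rlt_le_trans; [exact Hd| apply Rmin_l].
  - apply D2; auto. eapply Rlt_le_trans; [exact Hd| apply Rmin_r].
Qed.

Lemma LCR_sub {Z} (OZ : topology Z) (S S' : R -> Prop) h x : (forall y, 0 <= y <= 1 -> S y -> S' y) ->
  LCR OZ S' h x -> LCR OZ S h x.
Proof.
  intros HS H V HV Vx. destruct (H V HV Vx) as [d [pd D]]. exists d; split; [exact pd|].
  intros y Hy Sy Hd. apply D; auto.
Qed.

Lemma LCR_far {Z} (OZ : topology Z) (S : R -> Prop) h x :
  (exists e, 0 < e /\ forall y, Rabs (y - x) < e -> ~ S y) -> LCR OZ S h x.
Proof.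
  intros [e [pe He]] V HV Vx. exists e; split; auto. intros y _ Sy Hd. exfalso. eapply He; eauto.
Qed.

Lemma LCR_list {Z} (OZ : topology Z) {E} (l : list E) (S : E -> R -> Prop) h x :
  (forall e, In e l -> LCR OZ (S e) h x) -> LCR OZ (fun y => exists e, In e l /\ S e y) h x.
Proof.
  induction l as [|e0 l IH]; intro H.
  - apply LCR_far. exists 1. split; [lra|]. intros y _ [e [[] _]].
  - apply LCR_sub with (fun y => S e0 y \/ exists e, In e l /\ S e y).
    + intros y _ [e [[<-|He] Se]]; [left; auto | right; eauto].
    + apply LCR_union. apply H; left; auto. apply IH. intros; apply H; right; auto.
Qed.

Lemma compact_union {T} (O : topology T) K1 K2 : Defs.compact O K1 -> Defs.compact O K2 -> Defs.compact O (fun x => K1 x \/ K2 x).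
Proof.
  intros H1 H2 F HF Hc.
  destruct (H1 F HF) as [l1 [A1 B1]]. { intros x Kx; apply Hc; auto. }
  destruct (H2 F HF) as [l2 [A2 B2]]. { intros x Kx; apply Hc; auto. }
  exists (l1 ++ l2). split.
  - intros U HU. apply in_app_iff in HU; destruct HU; auto.
  - intros x [Kx|Kx]; [destruct (B1 x Kx) as [U [HU Ux]] | destruct (B2 x Kx) as [U [HU Ux]]];
      exists U; split; auto; apply in_app_iff; auto.
Qed.

Lemma compact_empty {T} (O : topology T) : Defs.compact O (fun _ => False).
Proof. intros F _ _. exists nil. split; [intros U []| intros x []]. Qed.

Lemma compact_ext {T} (O : topology T) K K' : Defs.compact O K -> (forall x, K x <-> K' x) -> Defs.compact O K'.
Proof. intros H E. rewrite <- (pext K K' E). exact H. Qed.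

Definition spec {Z} (OZ : topology Z) (y z : Z) := forall V, OZ V -> V y -> V z.

Lemma prod_box {S T} (OS : topology S) (OT : topology T) U V : OS U -> OT V ->
  prod_top OS OT (fun z => U (fst z) /\ V (snd z)).
Proof. intros HU HV O HO HB. apply HB. exists U, V. repeat split; auto; tauto. Qed.

Lemma prod_is {S T} (OS : topology S) (OT : topology T) : is_topology (prod_top OS OT).
Proof. apply gen_top. Qed.

Lemma I_gt_open c : I_top (fun s : I => c < proj1_sig s).
Proof. apply ball_I_open. intros t Ht. exists (proj1_sig t - c). split; [lra|].
  intros t' H'. apply Rabs_def2 in H'. lra. Qed.
Lemma I_lt_open c : I_top (fun s : I => proj1_sig s < c).
Proof. apply ball_I_open. intros t Ht. exists (c - proj1_sig t). split; [lra|].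
  intros t' H'. apply Rabs_def2 in H'. lra. Qed.

Lemma snd_open (V : I -> Prop) : I_top V -> prod_top I_top I_top (fun z : I * I => V (snd z)).
Proof. intro H. eapply open_ext. apply (prod_box I_top I_top (fun _ => True) V); auto. apply open_True, I_top_is.
  intro; simpl; tauto. Qed.
Lemma fst_open (V : I -> Prop) : I_top V -> prod_top I_top I_top (fun z : I * I => V (fst z)).
Proof. intro H. eapply open_ext. apply (prod_box I_top I_top V (fun _ => True)); auto. apply open_True, I_top_is.
  intro; simpl; tauto. Qed.

Lemma I_eq0 (s : I) : proj1_sig s <= 0 -> s = i0.
Proof. intro H. apply sig_ext. simpl. pose proof (I_bounds s). lra. Qed.

Lemma hom_dir1 {Z} (OZ : topology Z) z (u w h : I -> Z) :
  continuous I_top OZ u -> u i0 = z -> u i1 = z ->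
  (forall t, spec OZ (u t) (w t)) -> homotopic_rel OZ z w h -> homotopic_rel OZ z u h.
Proof.
  intros Hu Hu0 Hu1 Hs [H [HH [H0 [H1 [Hl Hr]]]]].
  exists (fun p => if Rle_dec (proj1_sig (snd p)) 0 then u (fst p) else H p).
  split; [|repeat split].
  - intros V HV. apply local_open; [apply prod_is|]. intros [t s] Hv. simpl in Hv.
    destruct (Rle_dec (proj1_sig s) 0) as [Hs0|Hs0].
    + exists (fun p => V (H p) /\ V (u (fst p))). split; [|split].
      * apply open_inter; [apply prod_is| apply HH; auto| apply (fst_open (fun x => V (u x))), Hu; auto].
      * simpl. rewrite (I_eq0 s Hs0), H0. split; auto. apply Hs; auto.
      * intros p [A1 A2]. cbv beta. destruct Rle_dec; auto.
    + exists (fun p => V (H p) /\ 0 < proj1_sig (snd p)). split; [|split].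
      * apply open_inter; [apply prod_is| apply HH; auto| apply (snd_open (fun s => 0 < proj1_sig s)), I_gt_open].
      * simpl. split; auto. lra.
      * intros p [A1 A2]. cbv beta. destruct Rle_dec; auto. exfalso; apply (Rlt_not_le _ _ A2 r).
  - intro s. simpl. destruct Rle_dec; auto. lra.
  - intro s. simpl. destruct Rle_dec; auto. lra.
  - intro t. simpl. destruct Rle_dec; auto.
  - intro t. simpl. destruct Rle_dec; auto.
Qed.

Definition psi (s : I) : I := clip (2 * proj1_sig s - 1).

Lemma psi_cont : continuous I_top I_top psi.
Proof.
  intros V HV. apply ball_I_open. intros t Vt.
  destruct (I_open_ball V HV (psi t) Vt) as [e [he He]].
  exists (e/2). split; [lra|]. intros t' Ht'. apply He. unfold psi.
  eapply Rle_lt_trans; [apply clip_lip|].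
  replace (2 * proj1_sig t' - 1 - (2 * proj1_sig t - 1)) with (2 * (proj1_sig t' - proj1_sig t)) by ring.
  rewrite Rabs_mult, (Rabs_right 2) by lra. lra.
Qed.

Definition Mpsi (p : I * I) : I * I := (fst p, psi (snd p)).

Lemma Mpsi_cont : continuous (prod_top I_top I_top) (prod_top I_top I_top) Mpsi.
Proof.
  apply cont_gen; [apply prod_is|]. intros W [U [V [HU [HV HW]]]].
  eapply open_ext. apply (prod_box I_top I_top U (fun s => V (psi s))); auto. apply psi_cont; auto.
  intro x. rewrite HW. simpl. tauto.
Qed.

Lemma hom_dir2 {Z} (OZ : topology Z) z (u w h : I -> Z) :
  continuous I_top OZ w -> w i0 = z -> w i1 = z ->
  (forall t, spec OZ (u t) (w t)) -> homotopic_rel OZ z u h -> homotopic_rel OZ z w h.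
Proof.
  intros Hw Hw0 Hw1 Hs [H [HH [H0 [H1 [Hl Hr]]]]].
  exists (fun p => if Rlt_dec (proj1_sig (snd p)) (1/2) then w (fst p) else H (Mpsi p)).
  split; [|repeat split].
  - intros V HV. apply local_open; [apply prod_is|]. intros [t s] Hv. simpl in Hv.
    destruct (Rlt_dec (proj1_sig s) (1/2)) as [Hs0|Hs0].
    + exists (fun p => V (w (fst p)) /\ proj1_sig (snd p) < 1/2). split; [|split].
      * apply open_inter; [apply prod_is| apply (fst_open (fun x => V (w x))), Hw; auto| apply (snd_open (fun s => proj1_sig s < 1/2)), I_lt_open].
      * simpl. auto.
      * intros p [A1 A2]. cbv beta. destruct Rlt_dec; auto. lra.
    + exists (fun p => V (H (Mpsi p)) /\ (1/2 < proj1_sig (snd p) \/ V (w (fst p)))). split; [|split].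
      * apply open_inter; [apply prod_is| |apply open_union2; [apply prod_is|apply (snd_open (fun s => 1/2 < proj1_sig s)), I_gt_open|apply (fst_open (fun x => V (w x))), Hw; auto]].
        apply (Mpsi_cont (fun p => V (H p))). apply HH; auto.
      * simpl. split; auto. destruct (Rlt_dec (1/2) (proj1_sig s)); [left; auto|right].
        assert (Es : psi s = i0). { unfold psi. rewrite <- clip0. f_equal. lra. }
        unfold Mpsi in Hv. simpl in Hv. rewrite Es, H0 in Hv. apply Hs; auto.
      * intros p [A1 A2]. cbv beta. destruct Rlt_dec; auto. destruct A2 as [A2|A2]; auto. exfalso; apply (Rlt_asym _ _ A2 r).
  - intro s. simpl. destruct Rlt_dec; auto. lra.
  - intro s. simpl. destruct Rlt_dec. lra. unfold Mpsi, psi. simpl.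
    replace (2 * 1 - 1) with 1 by ring. rewrite clip1. auto.
  - intro t. simpl. destruct Rlt_dec; auto. unfold Mpsi; simpl; auto.
  - intro t. simpl. destruct Rlt_dec; auto. unfold Mpsi; simpl; auto.
Qed.

Lemma hom_spec {Z} (OZ : topology Z) z (u w : I -> Z) :
  is_loop OZ z u -> is_loop OZ z w -> (forall t, spec OZ (u t) (w t)) -> hclass OZ z u = hclass OZ z w.
Proof.
  intros [Hu [Hu0 Hu1]] [Hw [Hw0 Hw1]] Hs. apply pext. intro h. unfold hclass. split.
  - intros [Hh Hom]. split; auto. eapply hom_dir2; eauto.
  - intros [Hh Hom]. split; auto. eapply hom_dir1; eauto.
Qed.

Section QS.
Variables (X : Type) (OX : topology X) (HX : is_topology OX) (A : X -> Prop) (HA : OX A) (a : X) (Ha : A a).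

Local Notation Y := (QT A).
Local Notation OY := (quot_top OX A).
Local Notation star := (qmap A a).

Lemma qmap_eq x y : qrel A x = qrel A y -> qmap A x = qmap A y.
Proof. intro H. apply sig_ext. exact H. Qed.

Lemma qmap_star x : A x -> qmap A x = star.
Proof.
  intro Hx. apply qmap_eq. apply pext. intro z. unfold qrel. split.
  - intros [<-|[_ Hz]]; right; auto.
  - intros [<-|[_ Hz]]; right; auto.
Qed.

Lemma star_A x : qmap A x = star -> A x.
Proof.
  intro H. apply (f_equal (@proj1_sig _ _)) in H. simpl in H.
  assert (E : qrel A x a) by (rewrite H; left; auto).
  destruct E as [<-|[Hx _]]; auto.
Qed.

Lemma qmap_inj x y : ~ A x -> qmap A x = qmap A y -> x = y.
Proof.
  intros Hx H. apply (f_equal (@proj1_sig _ _)) in H. simpl in H.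
  assert (E : qrel A y x) by (rewrite <- H; left; auto).
  destruct E as [<-|[_ Hx']]; auto. contradiction.
Qed.

Definition rep (q : Y) : X := proj1_sig (constructive_indefinite_description _ (proj2_sig q)).

Lemma rep_spec q : qmap A (rep q) = q.
Proof.
  apply sig_ext. unfold rep. destruct (constructive_indefinite_description _ _) as [x Hx]. simpl.
  symmetry; exact Hx.
Qed.

Lemma rep_qmap x : ~ A x -> rep (qmap A x) = x.
Proof. intro Hx. symmetry. apply qmap_inj; auto. symmetry. apply rep_spec. Qed.

Lemma rep_star_A : A (rep star).
Proof. apply star_A. apply rep_spec. Qed.

Lemma rep_notA q : q <> star -> ~ A (rep q).
Proof. intros Hq HAq. apply Hq. rewrite <- (rep_spec q). apply qmap_star; auto. Qed.

Lemma star_open : OY (fun q => q = star).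
Proof. unfold quot_top. eapply open_ext; [exact HA|]. intro x. split; [apply qmap_star|apply star_A]. Qed.

Lemma qmap_cont : continuous OX OY (qmap A).
Proof. intros V HV. exact HV. Qed.

Lemma cl_of_A x : A x -> closure OX A x.
Proof. intros Hx U OU Ux. exists x; auto. Qed.

Lemma clA_spec x : closure OX A x -> spec OY (qmap A x) star.
Proof.
  intros Hx V HV Vx. destruct (Hx _ HV Vx) as [y [Ay Vy]]. rewrite <- (qmap_star y Ay); auto.
Qed.

Definition Zq (q : Y) := closure OX A (rep q).

Lemma Zq_spec q : Zq q -> spec OY q star.
Proof. intro H. rewrite <- (rep_spec q). apply clA_spec; auto. Qed.

Lemma Zq_star : Zq star.
Proof. apply cl_of_A, rep_star_A. Qed.

Lemma Zq_compl_open : OY (fun q => ~ Zq q).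
Proof.
  unfold quot_top, Zq.
  apply open_ext with (fun x => ~ closure OX A x).
  - apply local_open; auto. intros x Hx.
    apply NNPP; intro Hn. apply Hx. intros U OU Ux. apply NNPP; intro Hn2. apply Hn.
    exists U. split; [exact OU|split; [exact Ux|]]. intros y Uy Hy. apply Hn2. destruct (Hy U OU Uy) as [z Hz]. eauto.
  - intro x. destruct (classic (A x)) as [Hx|Hx].
    + rewrite (qmap_star x Hx). split; intros H; exfalso; apply H; apply cl_of_A; auto; apply rep_star_A.
    + rewrite rep_qmap; tauto.
Qed.

Lemma lift_open V : OX V -> OY (fun q => q = star \/ V (rep q)).
Proof.
  intro HV. unfold quot_top. apply open_ext with (fun x => A x \/ V x).
  - apply open_union2; auto.
  - intro x. destruct (classic (A x)) as [Hx|Hx].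
    + split; intros _; left; auto. apply qmap_star; auto.
    + rewrite rep_qmap; auto. split; intros [H|H]; auto. contradiction. apply star_A in H. contradiction.
Qed.

End QS.

Lemma sup_lemma (Z : R -> Prop) q : Z 0 ->
  (forall x, 0 <= x <= 1 -> ~ Z x -> exists e, 0 < e /\ forall y, Rabs (y - x) < e -> 0 <= y <= 1 -> ~ Z y) ->
  0 <= q <= 1 -> ~ Z q -> exists al, 0 <= al < q /\ Z al /\ forall y, al < y <= q -> ~ Z y.
Proof.
  intros Z0 Hc Hq Zq.
  set (E := fun y => 0 <= y <= q /\ Z y).
  assert (HB : bound E) by (exists q; intros y [Hy _]; lra).
  assert (HE : exists y, E y) by (exists 0; split; [lra|auto]).
  destruct (completeness E HB HE) as [m [Hub Hlub]].
  assert (m0 : 0 <= m) by (apply Hub; split; [lra|auto]).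
  assert (mq : m <= q) by (apply Hlub; intros y [Hy _]; lra).
  assert (Zm : Z m).
  { apply NNPP; intro Hn. destruct (Hc m ltac:(lra) Hn) as [e [he He]].
    assert (m <= m - e/2). { apply Hlub. intros y [Hy Zy]. destruct (Rle_dec y (m - e/2)) as [|Hn']; auto. exfalso.
       assert (y <= m) by (apply Hub; split; auto). apply (He y); auto. apply Rabs_def1; lra. lra. }
    lra. }
  exists m. split. split; auto. destruct (Req_dec m q) as [->|]; [contradiction | lra]. split; auto.
  intros y Hy Zy. assert (y <= m) by (apply Hub; split; [lra|auto]). lra.
Qed.

Lemma inf_lemma (Z : R -> Prop) q : Z 1 ->
  (forall x, 0 <= x <= 1 -> ~ Z x -> exists e, 0 < e /\ forall y, Rabs (y - x) < e -> 0 <= y <= 1 -> ~ Z y) ->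
  0 <= q <= 1 -> ~ Z q -> exists be, q < be <= 1 /\ Z be /\ forall y, q <= y < be -> ~ Z y.
Proof.
  intros Z1 Hc Hq Zq.
  destruct (sup_lemma (fun y => Z (1 - y)) (1 - q)) as [al [H1 [H2 H3]]].
  - replace (1 - 0) with 1 by ring; auto.
  - intros x Hx Hn. destruct (Hc (1 - x)) as [e [he He]]; auto. lra.
    exists e; split; auto. intros y Hy Hy1. apply He; [|lra]. replace (1 - y - (1 - x)) with (- (y - x)) by ring.
    rewrite Rabs_Ropp; auto.
  - lra.
  - replace (1 - (1 - q)) with q by ring; auto.
  - exists (1 - al). split; [lra|]. split; auto. intros y Hy. replace y with (1 - (1 - y)) by ring. apply H3. lra.
Qed.

Fixpoint lmax (t : R) (l : list R) : R :=
  match l with nil => 0 | e :: l' => if Rle_dec e t then Rmax e (lmax t l') else lmax t l' end.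
Fixpoint rmin (t : R) (l : list R) : R :=
  match l with nil => 1 | e :: l' => if Rle_dec t e then Rmin e (rmin t l') else rmin t l' end.

Lemma lmax_le t l : 0 <= t -> lmax t l <= t.
Proof. intro Ht. induction l; simpl; auto. destruct Rle_dec; auto. apply Rmax_lub; auto. Qed.
Lemma lmax_ge0 t l : 0 <= lmax t l.
Proof. induction l; simpl; [lra|]. destruct Rle_dec; auto. eapply Rle_trans; [exact IHl| apply Rmax_r]. Qed.
Lemma lmax_ge t l e : In e l -> e <= t -> e <= lmax t l.
Proof.
  induction l as [|e' l IH]; simpl; [tauto|]. intros [<-|He] Het.
  - destruct Rle_dec; [apply Rmax_l|contradiction].
  - destruct Rle_dec; auto. eapply Rle_trans; [apply IH; auto| apply Rmax_r].
Qed.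
Lemma lmax_in t l : lmax t l = 0 \/ In (lmax t l) l.
Proof.
  induction l as [|e l IH]; simpl; auto. destruct Rle_dec.
  - unfold Rmax. destruct Rle_dec; [destruct IH; auto|auto].
  - destruct IH; auto.
Qed.
Lemma rmin_ge t l : t <= 1 -> t <= rmin t l.
Proof. intro Ht. induction l; simpl; auto. destruct Rle_dec; auto. apply Rmin_glb; auto. Qed.
Lemma rmin_le1 t l : rmin t l <= 1.
Proof. induction l; simpl; [lra|]. destruct Rle_dec; auto. eapply Rle_trans; [apply Rmin_r|exact IHl]. Qed.
Lemma rmin_le t l e : In e l -> t <= e -> rmin t l <= e.
Proof.
  induction l as [|e' l IH]; simpl; [tauto|]. intros [<-|He] Het.
  - destruct Rle_dec; [apply Rmin_l|contradiction].
  - destruct Rle_dec; auto. eapply Rle_trans; [apply Rmin_r|apply IH; auto].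
Qed.
Lemma rmin_in t l : rmin t l = 1 \/ In (rmin t l) l.
Proof.
  induction l as [|e l IH]; simpl; auto. destruct Rle_dec.
  - unfold Rmin. destruct Rle_dec; [auto|destruct IH; auto].
  - destruct IH; auto.
Qed.

Lemma ivs_closed (l : list (R * R)) x : ~ (exists p, In p l /\ fst p <= x <= snd p) ->
  exists e, 0 < e /\ forall y, Rabs (y - x) < e -> ~ (exists p, In p l /\ fst p <= y <= snd p).
Proof.
  induction l as [|p l IH]; intro H.
  - exists 1. split; [lra|]. intros y _ [p [[] _]].
  - destruct IH as [e2 [he2 He2]]. { intros [p' [Hp' Hx]]. apply H. exists p'; split; auto. right; auto. }
    assert (Hx : ~ (fst p <= x <= snd p)) by (intro; apply H; exists p; split; auto; left; auto).
    set (e1 := if Rlt_dec x (fst p) then fst p - x else x - snd p).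
    assert (he1 : 0 < e1) by (unfold e1; destruct Rlt_dec; lra).
    exists (Rmin e1 e2). split; [apply Rmin_glb_lt; auto|].
    intros y Hy [p' [[<-|Hp'] Hyp]].
    + assert (Rabs (y - x) < e1) by (eapply Rlt_le_trans; [exact Hy|apply Rmin_l]).
      apply Rabs_def2 in H0. unfold e1 in H0. destruct Rlt_dec; lra.
    + apply (He2 y). eapply Rlt_le_trans; [exact Hy|apply Rmin_r]. exists p'; auto.
Qed.

Lemma compact_list {Y'} (lk : list ((I -> Prop) * Y')) (Rl : Y' -> Prop) :
  (forall KU, In KU lk -> Defs.compact I_top (fst KU)) ->
  Defs.compact I_top (fun t => exists KU, In KU lk /\ fst KU t /\ Rl (snd KU)).
Proof.
  induction lk as [|KU0 lk IH]; intro H.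
  - eapply compact_ext; [apply compact_empty|]. intro t; split; [tauto|]. intros [KU [[] _]].
  - assert (IH' := IH (fun KU HKU => H KU (or_intror HKU))).
    destruct (classic (Rl (snd KU0))) as [HR|HR].
    + eapply compact_ext; [apply (compact_union _ _ _ (H KU0 (or_introl eq_refl)) IH')|].
      intro t; split.
      * intros [Kt|[KU [HKU [Kt Rt]]]]; [exists KU0; split; [left|]; auto|exists KU; split; [right|]; auto].
      * intros [KU [[<-|HKU] [Kt Rt]]]; [left; auto| right; exists KU; auto].
    + eapply compact_ext; [apply IH'|]. intro t; split.
      * intros [KU [HKU [Kt Rt]]]; exists KU; split; [right|]; auto.
      * intros [KU [[<-|HKU] [Kt Rt]]]; [contradiction| exists KU; auto].
Qed.

Section Core.
Variables (X : Type) (OX : topology X) (HX : is_topology OX) (A : X -> Prop) (HA : OX A) (a : X) (Ha : A a).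
Hypothesis (Hpc : path_connected OX (closure OX A)).
Variable (g : I -> QT A).
Hypothesis (Hg : is_loop (quot_top OX A) (qmap A a) g).

Local Notation OY := (quot_top OX A).
Local Notation star := (qmap A a).
Local Notation repq := (rep X A).
Local Notation ZQ := (Zq X OX A).

Definition gR (x : R) := g (clip x).

Lemma gR_LC x : 0 <= x <= 1 -> LCR OY (fun _ => True) gR x.
Proof. apply cont_LCR. apply Hg. Qed.
Lemma gR0 : gR 0 = star.
Proof. unfold gR. rewrite clip0. apply Hg. Qed.
Lemma gR1 : gR 1 = star.
Proof. unfold gR. rewrite clip1. apply Hg. Qed.
Lemma gR_of t : gR (proj1_sig t) = g t.
Proof. unfold gR. rewrite clip_of. auto. Qed.

Lemma Zclosed x : 0 <= x <= 1 -> ~ ZQ (gR x) ->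
  exists e, 0 < e /\ forall y, Rabs (y - x) < e -> 0 <= y <= 1 -> ~ ZQ (gR y).
Proof.
  intros Hx Hn. destruct (gR_LC x Hx (fun q => ~ ZQ q) (Zq_compl_open X OX HX A a Ha) Hn) as [d [hd Hd]].
  exists d; split; [exact hd|]. intros y Hy Hy1. apply Hd; auto.
Qed.

Lemma star_nbhd x : 0 <= x <= 1 -> gR x = star ->
  exists e, 0 < e /\ forall y, 0 <= y <= 1 -> Rabs (y - x) < e -> gR y = star.
Proof.
  intros Hx E. destruct (gR_LC x Hx (fun q => q = star) (star_open X OX A HA a Ha) E) as [d [hd Hd]].
  exists d; split; [exact hd|]. intros y Hy Hdy. apply Hd; auto.
Qed.

Definition piece (p : R * R) := 0 < fst p /\ fst p < snd p /\ snd p < 1 /\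
  (forall x, fst p <= x <= snd p -> gR x <> star) /\ ZQ (gR (fst p)) /\ ZQ (gR (snd p)).

Lemma piece_exists q : 0 <= q <= 1 -> ~ ZQ (gR q) -> exists p, piece p /\ fst p < q < snd p.
Proof.
  intros Hq Nq.
  assert (Z0 : ZQ (gR 0)) by (rewrite gR0; apply Zq_star; auto).
  assert (Z1 : ZQ (gR 1)) by (rewrite gR1; apply Zq_star; auto).
  destruct (sup_lemma (fun y => ZQ (gR y)) q Z0 Zclosed Hq Nq) as [al [Hal [Zal Hal2]]].
  destruct (inf_lemma (fun y => ZQ (gR y)) q Z1 Zclosed Hq Nq) as [be [Hbe [Zbe Hbe2]]].
  assert (Nal : gR al <> star).
  { intro E. destruct (star_nbhd al) as [e [he He]]; [lra|auto|].
    set (y := Rmin (al + e/2) q).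
    assert (y1 : al < y) by (apply Rmin_glb_lt; lra).
    assert (y2 : y <= q) by apply Rmin_r.
    assert (y3 : y <= al + e/2) by apply Rmin_l.
    apply (Hal2 y); [lra|]. rewrite He; [apply Zq_star; auto|lra|apply Rabs_def1; lra]. }
  assert (Nbe : gR be <> star).
  { intro E. destruct (star_nbhd be) as [e [he He]]; [lra|auto|].
    set (y := Rmax (be - e/2) q).
    assert (y1 : y < be) by (apply Rmax_lub_lt; lra).
    assert (y2 : q <= y) by apply Rmax_r.
    assert (y3 : be - e/2 <= y) by apply Rmax_l.
    apply (Hbe2 y); [lra|]. rewrite He; [apply Zq_star; auto|lra|apply Rabs_def1; lra]. }
  exists (al, be). unfold piece; simpl. split; [|lra].
  split; [|split; [lra|split; [|split; [|split]]]]; auto.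
  - destruct (Req_dec al 0) as [E|E]; [|lra]. rewrite E, gR0 in Nal. contradiction.
  - destruct (Req_dec be 1) as [E|E]; [|lra]. rewrite E, gR1 in Nbe. contradiction.
  - intros x Hx E.
    destruct (Req_dec x al) as [->|E1]; [contradiction|].
    destruct (Req_dec x be) as [->|E2]; [contradiction|].
    destruct (Rle_dec x q).
    + apply (Hal2 x); [lra|]. rewrite E. apply Zq_star; auto.
    + apply (Hbe2 x); [lra|]. rewrite E. apply Zq_star; auto.
Qed.

Section Pieces.
Variable lp : list (R * R).
Hypothesis Hlp : forall p, In p lp -> piece p.

Definition Pset y := exists p, In p lp /\ fst p <= y <= snd p.
Definition Ends := flat_map (fun p : R * R => fst p :: snd p :: nil) lp.

Lemma P_props y : Pset y -> 0 < y < 1 /\ gR y <> star.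
Proof. intros [p [Hp Hy]]. destruct (Hlp p Hp) as [h1 [h2 [h3 [h4 _]]]]. split; [lra|]. apply h4; auto. Qed.

Lemma end_props e : In e Ends -> 0 < e < 1 /\ gR e <> star /\ ZQ (gR e) /\ Pset e.
Proof.
  intro He. apply in_flat_map in He. destruct He as [p [Hp He]].
  destruct (Hlp p Hp) as [h1 [h2 [h3 [h4 [h5 h6]]]]].
  assert (Pe : Pset e) by (exists p; split; auto; destruct He as [<-|[<-|[]]]; lra).
  destruct (P_props e Pe) as [b1 b2].
  destruct He as [<-|[<-|[]]]; auto.
Qed.

Lemma P_closed x : ~ Pset x -> exists e, 0 < e /\ forall y, Rabs (y - x) < e -> ~ Pset y.
Proof. apply ivs_closed. Qed.

Definition lft t := lmax t Ends.
Definition rgt t := rmin t Ends.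

Lemma no_end_between y0 e : 0 <= y0 <= 1 -> In e Ends -> ~ (lft y0 < e < rgt y0).
Proof.
  intros Hy He. unfold lft, rgt. destruct (Rle_dec e y0).
  - pose proof (lmax_ge y0 Ends e He r). lra.
  - pose proof (rmin_le y0 Ends e He ltac:(lra)). lra.
Qed.

Lemma lft_bounds y : 0 <= y <= 1 -> 0 <= lft y <= y.
Proof. intro. unfold lft. split; [apply lmax_ge0|apply lmax_le; lra]. Qed.
Lemma rgt_bounds y : 0 <= y <= 1 -> y <= rgt y <= 1.
Proof. intro. unfold rgt. split; [apply rmin_ge; lra|apply rmin_le1]. Qed.

Lemma lft_in y : lft y = 0 \/ In (lft y) Ends.
Proof. apply lmax_in. Qed.
Lemma rgt_in y : rgt y = 1 \/ In (rgt y) Ends.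
Proof. apply rmin_in. Qed.

Lemma gap_lt y0 : 0 <= y0 <= 1 -> ~ Pset y0 -> lft y0 < rgt y0.
Proof.
  intros Hy NP. pose proof (lft_bounds y0 Hy). pose proof (rgt_bounds y0 Hy).
  destruct (Rlt_dec (lft y0) (rgt y0)) as [|Hn]; auto. exfalso.
  assert (E1 : lft y0 = y0) by lra. assert (E2 : rgt y0 = y0) by lra.
  destruct (lft_in y0) as [E|E].
  - destruct (rgt_in y0) as [F|F]; [lra|]. apply end_props in F. lra.
  - apply end_props in E. rewrite E1 in E. tauto.
Qed.

Lemma gap_P y0 y : 0 <= y0 <= 1 -> ~ Pset y0 -> lft y0 <= y <= rgt y0 -> Pset y -> y = lft y0 \/ y = rgt y0.
Proof.
  intros Hy0 NP Hy [p [Hp Hpy]].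
  assert (Ha1 : In (fst p) Ends) by (apply in_flat_map; exists p; split; [auto|left; auto]).
  assert (Hb1 : In (snd p) Ends) by (apply in_flat_map; exists p; split; [auto|right; left; auto]).
  pose proof (no_end_between y0 _ Hy0 Ha1). pose proof (no_end_between y0 _ Hy0 Hb1).
  pose proof (lft_bounds y0 Hy0). pose proof (rgt_bounds y0 Hy0).
  destruct (Req_dec y (lft y0)); auto. destruct (Req_dec y (rgt y0)); auto. exfalso.
  apply NP. exists p. split; auto.
  assert (fst p <= lft y0) by (destruct (Rle_dec (fst p) (lft y0)); auto; exfalso; apply H; lra).
  assert (rgt y0 <= snd p) by (destruct (Rle_dec (rgt y0) (snd p)); auto; exfalso; apply H0; lra).
  lra.
Qed.

Lemma gap_lr y0 y : 0 <= y0 <= 1 -> ~ Pset y0 -> lft y0 <= y <= rgt y0 -> ~ Pset y ->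
  lft y = lft y0 /\ rgt y = rgt y0.
Proof.
  intros Hy0 NP Hy NPy.
  pose proof (lft_bounds y0 Hy0). pose proof (rgt_bounds y0 Hy0).
  assert (Hy1 : 0 <= y <= 1) by lra.
  pose proof (lft_bounds y Hy1). pose proof (rgt_bounds y Hy1).
  split.
  - assert (lft y0 <= lft y).
    { destruct (lft_in y0) as [E|E]; [lra|]. apply (lmax_ge y Ends (lft y0) E); lra. }
    destruct (lft_in y) as [E|E]; [lra|].
    pose proof (no_end_between y0 _ Hy0 E).
    destruct (Rle_dec (lft y) (lft y0)); [lra|]. exfalso.
    assert (lft y = rgt y0) by (destruct (Rlt_dec (lft y) (rgt y0)); [exfalso; apply H4; lra|lra]).
    apply NPy. replace y with (lft y) by lra. apply end_props; auto.
  - assert (rgt y <= rgt y0).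
    { destruct (rgt_in y0) as [E|E]; [lra|]. apply (rmin_le y Ends (rgt y0) E); lra. }
    destruct (rgt_in y) as [E|E]; [lra|].
    pose proof (no_end_between y0 _ Hy0 E).
    destruct (Rle_dec (rgt y0) (rgt y)); [lra|]. exfalso.
    assert (rgt y = lft y0) by (destruct (Rlt_dec (lft y0) (rgt y)); [exfalso; apply H4; lra|lra]).
    apply NPy. replace y with (rgt y) by lra. apply end_props; auto.
Qed.

Definition ev x := if excluded_middle_informative (gR x = star) then a else repq (gR x).

Lemma ev_cl x : x = 0 \/ x = 1 \/ In x Ends -> closure OX A (ev x).
Proof.
  intros H. unfold ev. destruct excluded_middle_informative as [E|E]; [apply cl_of_A; auto|].
  destruct H as [->|[->|H]]; [rewrite gR0 in E; tauto|rewrite gR1 in E; tauto|].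
  apply end_props in H. apply H.
Qed.

Lemma ev_lft y : closure OX A (ev (lft y)).
Proof. apply ev_cl. destruct (lft_in y); auto. Qed.
Lemma ev_rgt y : closure OX A (ev (rgt y)).
Proof. apply ev_cl. destruct (rgt_in y); auto. Qed.

Definition pth (x y : X) : I -> X :=
  match excluded_middle_informative (closure OX A x /\ closure OX A y) with
  | left H => proj1_sig (constructive_indefinite_description _ (Hpc x y (proj1 H) (proj2 H)))
  | right _ => fun _ => x
  end.

Lemma pth_spec x y : closure OX A x -> closure OX A y ->
  continuous I_top OX (pth x y) /\ pth x y i0 = x /\ pth x y i1 = y /\ forall t, closure OX A (pth x y t).
Proof.
  intros Hx Hy. unfold pth. destruct excluded_middle_informative as [H|H]; [|tauto].
  destruct constructive_indefinite_description as [p Hp]. simpl. tauto.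
Qed.

Definition aff u v y := clip ((y - u) / (v - u)).

Definition fR y := if excluded_middle_informative (Pset y) then repq (gR y)
  else pth (ev (lft y)) (ev (rgt y)) (aff (lft y) (rgt y) y).

Lemma gap_formula y0 y : 0 <= y0 <= 1 -> ~ Pset y0 -> lft y0 <= y <= rgt y0 ->
  fR y = pth (ev (lft y0)) (ev (rgt y0)) (aff (lft y0) (rgt y0) y).
Proof.
  intros Hy0 NP Hy. pose proof (gap_lt y0 Hy0 NP) as Hlt.
  destruct (pth_spec (ev (lft y0)) (ev (rgt y0)) (ev_lft y0) (ev_rgt y0)) as [_ [P0 [P1 _]]].
  unfold fR. destruct excluded_middle_informative as [Py|NPy].
  - destruct (P_props y Py) as [_ Ny].
    assert (Ey : repq (gR y) = ev y) by (unfold ev; destruct excluded_middle_informative; tauto).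
    destruct (gap_P y0 y Hy0 NP Hy Py) as [E|E].
    + unfold aff. rewrite E. replace ((lft y0 - lft y0) / (rgt y0 - lft y0)) with 0 by (field; lra).
      rewrite clip0, P0. rewrite <- E. auto.
    + unfold aff. rewrite E. replace ((rgt y0 - lft y0) / (rgt y0 - lft y0)) with 1 by (field; lra).
      rewrite clip1, P1. rewrite <- E. auto.
  - destruct (gap_lr y0 y Hy0 NP Hy NPy) as [E1 E2]. rewrite E1, E2. auto.
Qed.

Definition Gap (uv : R * R) y := fst uv <= y <= snd uv /\
  exists y0, 0 <= y0 <= 1 /\ ~ Pset y0 /\ lft y0 = fst uv /\ rgt y0 = snd uv.

Lemma fR_LC x : 0 <= x <= 1 -> LCR OX (fun _ => True) fR x.
Proof.
  intro Hx.
  apply LCR_sub with (fun y => Pset y \/ exists uv, In uv (list_prod (0 :: Ends) (1 :: Ends)) /\ Gap uv y).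
  { intros y Hy _. destruct (classic (Pset y)) as [Py|NPy]; [left; auto|right].
    exists (lft y, rgt y). split.
    - apply in_prod; [destruct (lft_in y) as [E|E]; [rewrite E; left; auto|right; auto]
                     |destruct (rgt_in y) as [E|E]; [rewrite E; left; auto|right; auto]].
    - split; simpl. split; [apply lft_bounds|apply rgt_bounds]; auto.
      exists y. auto. }
  apply LCR_union.
  - destruct (classic (Pset x)) as [Px|NPx].
    + intros V HV Vx. unfold fR in Vx. destruct excluded_middle_informative as [Pxx|Pxx]; [|contradiction].
      destruct (gR_LC x Hx _ (lift_open X OX HX A HA a Ha V HV) (or_intror Vx)) as [d [hd Hd]].
      exists d. split; [exact hd|]. intros y Hy Py Hdy. destruct (Hd y Hy Logic.I Hdy) as [E|E].
      * exfalso. apply (P_props y Py). auto.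
      * unfold fR. destruct excluded_middle_informative; [auto|contradiction].
    + apply LCR_far. apply P_closed; auto.
  - apply LCR_list. intros [u v] _.
    destruct (classic (exists y0, 0 <= y0 <= 1 /\ ~ Pset y0 /\ lft y0 = u /\ rgt y0 = v)) as [[y0 [Hy0 [NP [Eu Ev]]]]|Hn].
    + subst u v. pose proof (gap_lt y0 Hy0 NP) as Hlt.
      destruct (pth_spec (ev (lft y0)) (ev (rgt y0)) (ev_lft y0) (ev_rgt y0)) as [Pc _].
      destruct (classic (lft y0 <= x <= rgt y0)) as [Hin|Hout].
      * intros V HV Vx. rewrite (gap_formula y0 x) in Vx by auto.
        destruct (I_open_ball _ (Pc V HV) _ Vx) as [e [he He]].
        exists (e * (rgt y0 - lft y0)). split; [apply Rmult_lt_0_compat; lra|].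
        intros y Hy [Hyin _] Hdy. simpl in Hyin. rewrite (gap_formula y0 y) by auto. apply He.
        unfold aff. eapply Rle_lt_trans; [apply clip_lip|].
        replace ((y - lft y0) / (rgt y0 - lft y0) - (x - lft y0) / (rgt y0 - lft y0))
          with ((y - x) * / (rgt y0 - lft y0)) by (field; lra).
        rewrite Rabs_mult, (Rabs_right (/ (rgt y0 - lft y0))) by (left; apply Rinv_0_lt_compat; lra).
        apply (Rmult_lt_reg_r (rgt y0 - lft y0)); [lra|].
        rewrite Rmult_assoc, Rinv_l by lra. lra.
      * apply LCR_far. exists (if Rlt_dec x (lft y0) then lft y0 - x else x - rgt y0).
        split; [destruct Rlt_dec; lra|]. intros y Hy [Hyin _]. simpl in Hyin.
        apply Rabs_def2 in Hy. destruct Rlt_dec; lra.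
    + apply LCR_far. exists 1. split; [lra|]. intros y _ [_ Hex]. apply Hn. exact Hex.
Qed.

Definition g'R y := if excluded_middle_informative (Pset y) then gR y else star.

Lemma g'R_LC x : 0 <= x <= 1 -> LCR OY (fun _ => True) g'R x.
Proof.
  intro Hx. apply LCR_sub with (fun y => Pset y \/ ~ Pset y).
  { intros y _ _. apply classic. }
  apply LCR_union.
  - destruct (classic (Pset x)) as [Px|NPx].
    + intros V HV Vx. unfold g'R in Vx. destruct excluded_middle_informative as [Pxx|Pxx]; [|contradiction].
      destruct (gR_LC x Hx V HV Vx) as [d [hd Hd]]. exists d. split; [exact hd|].
      intros y Hy Py Hdy. unfold g'R. destruct excluded_middle_informative; [|contradiction]. apply Hd; auto.
    + apply LCR_far. apply P_closed; auto.
  - destruct (classic (Pset x)) as [Px|NPx].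
    + intros V HV Vx. unfold g'R in Vx. destruct excluded_middle_informative as [Pxx|Pxx]; [|contradiction].
      destruct (classic (V star)) as [Vs|Vs].
      * exists 1. split; [lra|]. intros y _ NPy _. unfold g'R. destruct excluded_middle_informative; [contradiction|auto].
      * destruct Px as [p [Hp Hxp]]. destruct (Hlp p Hp) as [h1 [h2 [h3 [h4 [h5 h6]]]]].
        destruct (Req_dec x (fst p)) as [E|E].
        { exfalso. apply Vs. rewrite E in Vx. apply (Zq_spec X OX A a Ha _ h5); auto. }
        destruct (Req_dec x (snd p)) as [E'|E'].
        { exfalso. apply Vs. rewrite E' in Vx. apply (Zq_spec X OX A a Ha _ h6); auto. }
        exists (Rmin (x - fst p) (snd p - x)). split; [apply Rmin_glb_lt; lra|].
        intros y _ NPy Hdy. exfalso. apply NPy. exists p. split; auto.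
        pose proof (Rmin_l (x - fst p) (snd p - x)). pose proof (Rmin_r (x - fst p) (snd p - x)).
        apply Rabs_def2 in Hdy. lra.
    + intros V HV Vx. unfold g'R in Vx. destruct excluded_middle_informative; [contradiction|].
      exists 1. split; [lra|]. intros y _ NPy _. unfold g'R. destruct excluded_middle_informative; [contradiction|auto].
Qed.

Lemma pieces_result : exists (f : I -> X) (g' : I -> QT A),
  is_loop OX a f /\ is_loop OY star g' /\ (forall t, spec OY (qmap A (f t)) (g' t)) /\
  (forall t, Pset (proj1_sig t) -> g' t = g t) /\ (forall t, ~ Pset (proj1_sig t) -> g' t = star).
Proof.
  assert (NP0 : ~ Pset 0) by (intro H; apply P_props in H; lra).
  assert (NP1 : ~ Pset 1) by (intro H; apply P_props in H; lra).
  exists (fun t => fR (proj1_sig t)), (fun t => g'R (proj1_sig t)).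
  split; [|split; [|split; [|split]]].
  - split; [apply LCR_cont; intro t; apply fR_LC, I_bounds|]. simpl. split.
    + assert (H01 : 0 <= 0 <= 1) by lra.
      pose proof (lft_bounds 0 H01). pose proof (rgt_bounds 0 H01). pose proof (gap_lt 0 H01 NP0).
      rewrite (gap_formula 0 0) by (auto; lra).
      destruct (pth_spec (ev (lft 0)) (ev (rgt 0)) (ev_lft 0) (ev_rgt 0)) as [_ [P0 _]].
      assert (E : lft 0 = 0) by lra. unfold aff. rewrite E.
      replace ((0 - 0) / (rgt 0 - 0)) with 0 by (field; lra). rewrite clip0. rewrite <- E at 1. rewrite P0.
      rewrite E. unfold ev. destruct excluded_middle_informative as [_|N]; auto. rewrite gR0 in N; tauto.
    + assert (H01 : 0 <= 1 <= 1) by lra.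
      pose proof (lft_bounds 1 H01). pose proof (rgt_bounds 1 H01). pose proof (gap_lt 1 H01 NP1).
      rewrite (gap_formula 1 1) by (auto; lra).
      destruct (pth_spec (ev (lft 1)) (ev (rgt 1)) (ev_lft 1) (ev_rgt 1)) as [_ [_ [P1 _]]].
      assert (E : rgt 1 = 1) by lra. unfold aff. rewrite E.
      replace ((1 - lft 1) / (1 - lft 1)) with 1 by (field; lra). rewrite clip1. rewrite <- E at 2. rewrite P1.
      rewrite E. unfold ev. destruct excluded_middle_informative as [_|N]; auto. rewrite gR1 in N; tauto.
  - split; [apply LCR_cont; intro t; apply g'R_LC, I_bounds|]. simpl. unfold g'R.
    split; destruct excluded_middle_informative; tauto.
  - intro t. unfold fR, g'R. destruct excluded_middle_informative as [Pt|NPt].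
    + rewrite rep_spec. intros V _ H; exact H.
    + destruct (pth_spec (ev (lft (proj1_sig t))) (ev (rgt (proj1_sig t))) (ev_lft _) (ev_rgt _)) as [_ [_ [_ Hc]]].
      apply clA_spec; auto.
  - intros t Pt. unfold g'R. destruct excluded_middle_informative; [|contradiction]. apply gR_of.
  - intros t NPt. unfold g'R. destruct excluded_middle_informative; [contradiction|auto].
Qed.

End Pieces.

Lemma core (lk : list ((I -> Prop) * (QT A -> Prop))) :
  (forall KU, In KU lk -> Defs.compact I_top (fst KU) /\ OY (snd KU) /\ forall t, fst KU t -> snd KU (g t)) ->
  exists (f : I -> X) (g' : I -> QT A), is_loop OX a f /\ is_loop OY star g' /\
    (forall t, spec OY (qmap A (f t)) (g' t)) /\
    (forall KU, In KU lk -> forall t, fst KU t -> snd KU (g' t)).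
Proof.
  intro Hlk.
  set (Q := fun t : I => exists KU, In KU lk /\ fst KU t /\ ~ snd KU star).
  assert (HQc : Defs.compact I_top Q).
  { apply (compact_list lk (fun U => ~ U star)). intros KU HKU; apply Hlk; auto. }
  assert (HQz : forall t, Q t -> ~ ZQ (g t)).
  { intros t [KU [HKU [Kt Ns]]] Z. apply Ns. apply (Zq_spec X OX A a Ha _ Z); apply Hlk; auto. }
  set (F := fun U : I -> Prop => exists p, piece p /\ forall t, U t <-> fst p < proj1_sig t < snd p).
  destruct (HQc F) as [lU [HlU1 HlU2]].
  - intros U [p [_ HU]]. eapply open_ext; [|intro t; symmetry; apply HU]. apply ball_I_open.
    intros t Ht. exists (Rmin (proj1_sig t - fst p) (snd p - proj1_sig t)). split; [apply Rmin_glb_lt; lra|].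
    intros t' Ht'. pose proof (Rmin_l (proj1_sig t - fst p) (snd p - proj1_sig t)).
    pose proof (Rmin_r (proj1_sig t - fst p) (snd p - proj1_sig t)). apply Rabs_def2 in Ht'. lra.
  - intros t Qt. destruct (piece_exists (proj1_sig t)) as [p [Hp Hq]]; [apply I_bounds| rewrite gR_of; apply HQz; auto|].
    exists (fun t => fst p < proj1_sig t < snd p). split; [exists p; split; auto; tauto|auto].
  - assert (Hlp : exists lp, (forall p, In p lp -> piece p) /\
       forall U, In U lU -> forall t, U t -> exists p, In p lp /\ fst p < proj1_sig t < snd p).
    { clear HlU2. induction lU as [|U0 lU IH].
      - exists nil. split; [intros p []|intros U []].
      - destruct IH as [lp [H1 H2]]. { intros U HU; apply HlU1; right; auto. }
        destruct (HlU1 U0 (or_introl eq_refl)) as [p0 [Hp0 HU0]].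
        exists (p0 :: lp). split.
        + intros p [<-|Hp]; auto.
        + intros U [<-|HU] t Ut.
          * exists p0. split; [left; auto|]. apply HU0; auto.
          * destruct (H2 U HU t Ut) as [p [Hp Hpt]]. exists p. split; [right|]; auto. }
    destruct Hlp as [lp [Hlp Hcov]].
    destruct (pieces_result lp Hlp) as [f [g' [Hf [Hg' [Hs [HP HnP]]]]]].
    exists f, g'. split; [auto|split; [auto|split; [auto|]]].
    intros KU HKU t Kt. destruct (classic (Pset lp (proj1_sig t))) as [Pt|Pt].
    + rewrite HP; auto. apply Hlk; auto.
    + rewrite HnP; auto. apply NNPP; intro Ns. apply Pt.
      destruct (HlU2 t) as [U [HU Ut]]. { exists KU; auto. }
      destruct (Hcov U HU t Ut) as [p [Hp Hpt]]. exists p; split; auto; lra.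
Qed.

End Core.

Lemma conv_list {Y} (OY : topology Y) (y : Y) (l : list (Loop OY y -> Prop)) (gL : Loop OY y) :
  (forall V, In V l -> (exists (K : I -> Prop) (U : Y -> Prop), Defs.compact I_top K /\ OY U /\
        forall h : Loop OY y, V h <-> (forall t, K t -> U (proj1_sig h t))) /\ V gL) ->
  exists lk : list ((I -> Prop) * (Y -> Prop)),
   (forall KU, In KU lk -> Defs.compact I_top (fst KU) /\ OY (snd KU) /\ forall t, fst KU t -> snd KU (proj1_sig gL t)) /\
   (forall h : Loop OY y, (forall KU, In KU lk -> forall t, fst KU t -> snd KU (proj1_sig h t)) -> forall V, In V l -> V h).
Proof.
  induction l as [|V0 l IH]; intro H.
  - exists nil. split; [intros KU []|intros h _ V []].
  - destruct IH as [lk [H1 H2]]. { intros V HV; apply H; right; auto. }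
    destruct (H V0 (or_introl eq_refl)) as [[K [U [HK [HU HE]]]] V0g].
    exists ((K, U) :: lk). split.
    + intros KU [<-|HKU]; auto. simpl. split; auto. split; auto. apply HE; auto.
    + intros h Hh V [<-|HV].
      * apply HE. intros t Kt. apply (Hh (K, U)); [left|]; auto.
      * apply H2; auto. intros KU HKU; apply Hh; right; auto.
Qed.

Theorem theorem3p2 (X : Type) (OX : topology X) (HX : is_topology OX)
  (A : X -> Prop) (HA : OX A) (Hpc : path_connected OX (closure OX A))
  (a : X) (Ha : A a) :
  dense (pi1_top (quot_top OX A) (qmap A a)) (pstar_image OX A a).
Proof.
  intros c W HW Wc.
  destruct c as [C HC]. destruct HC as [g [Hg HCg]]. subst C.
  set (gL := exist _ g Hg : Loop (quot_top OX A) (qmap A a)).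
  assert (Wg : W (cls _ _ gL)).
  { eapply eq_ind; [exact Wc|]. apply sig_ext. reflexivity. }
  unfold pi1_top, loop_top in HW.
  destruct (gen_basis _ _ _ HW Wg) as [l [Hl1 Hl2]].
  destruct (conv_list _ _ l gL Hl1) as [lk [Hk1 Hk2]].
  destruct (core X OX HX A HA a Ha Hpc g Hg lk Hk1) as [f [g' [Hf [Hg' [Hs HN]]]]].
  set (g'L := exist _ g' Hg' : Loop (quot_top OX A) (qmap A a)).
  assert (Wg' : W (cls _ _ g'L)).
  { apply Hl2. apply Hk2. exact HN. }
  assert (Hpf : is_loop (quot_top OX A) (qmap A a) (fun t => qmap A (f t))).
  { destruct Hf as [Hfc [Hf0 Hf1]]. split; [|split].
    - intros V HV. apply (Hfc (fun x => V (qmap A x))). exact HV.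
    - rewrite Hf0; auto.
    - rewrite Hf1; auto. }
  set (pfL := exist _ (fun t => qmap A (f t)) Hpf : Loop (quot_top OX A) (qmap A a)).
  exists (cls _ _ pfL). split.
  - exists f. split; auto.
  - replace (cls _ _ pfL) with (cls _ _ g'L); auto.
    apply sig_ext. simpl. symmetry. apply hom_spec; auto.
Qed.
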